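(* For any $n,N\in\mathbb{N}$ and $a\in\mathbb{T}$, with $H_N=\sum_{k=1}^N1/k$, $$\frac{1}{2N+1}\sum_{w\in\mathbb{T}_N}\Big|\mathsf{Dir}_n\Big(\frac wa\Big)\Big|\le\frac{4n+2}{2N+1}+H_N,$$ $$\frac{1}{2N+1}\sum_{w\in\mathbb{T}_N}\Big|\mathsf{Fej}^+_{2n}\Big(\frac wa\Big)\Big|=\frac{1}{2N+1}\sum_{w\in\mathbb{T}_N}\Big|\mathsf{Fej}_n\Big(\frac wa\Big)\Big|\le\frac{2n+2}{2N+1}+\Big(\frac{2N+1}{2n+2}\Big)\frac{\pi^2}{6}.$$
   Context: $\mathbb{T}$ is the unit circle; $\mathbb{T}_N=\{\exp(i2\pi k/(2N+1)):k=-N,\dots,N\}$. Dirichlet kernel $\mathsf{Dir}_n(z)=\sum_{|k|\le n}z^k$; Fejér kernel $\mathsf{Fej}_n(z)=\sum_{|k|\le n}\big(1-\frac{|k|}{n+1}\big)z^k$; causal Fejér kernel $\mathsf{Fej}^+_{2n}(z)=z^n\mathsf{Fej}_n(z)$. *)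

(* Defs.v *)
From Stdlib Require Import Reals ZArith List.
From Coquelicot Require Import Coquelicot.
Import ListNotations.
Open Scope R_scope.

Definition Cpowz (z : C) (k : Z) : C :=
  if (0 <=? k)%Z then Cpow z (Z.to_nat k) else Cpow (Cinv z) (Z.to_nat (- k)).

Definition Csum {A : Type} (f : A -> C) (l : list A) : C :=
  fold_right Cplus (RtoC 0) (map f l).

Definition Zrange (n : nat) : list Z :=
  map (fun j => (Z.of_nat j - Z.of_nat n)%Z) (seq 0 (2 * n + 1)).

Definition Dir (n : nat) (z : C) : C := Csum (fun k => Cpowz z k) (Zrange n).

Definition Fej (n : nat) (z : C) : C :=
  Csum (fun k => Cmult (RtoC (1 - IZR (Z.abs k) / (INR n + 1))) (Cpowz z k))
       (Zrange n).

Definition FejPlus2 (n : nat) (z : C) : C := Cmult (Cpow z n) (Fej n z).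

Definition rootpt (N : nat) (k : Z) : C :=
  (cos (2 * PI * IZR k / (2 * INR N + 1)), sin (2 * PI * IZR k / (2 * INR N + 1))).
Definition TN (N : nat) : list C := map (rootpt N) (Zrange N).

Definition Rsuml {A : Type} (f : A -> R) (l : list A) : R :=
  fold_right Rplus 0 (map f l).

Definition harmonic (N : nat) : R := Rsuml (fun k => / INR k) (seq 1 N).

Definition avgTN (N : nat) (K : C -> C) (a : C) : R :=
  / (2 * INR N + 1) * Rsuml (fun w => Cmod (K (Cdiv w a))) (TN N).

(* Main.v *)
Require Import Defs.
From Stdlib Require Import Reals Lra Lia ZArith List.
From Coquelicot Require Import Coquelicot.
Import ListNotations.
Open Scope R_scope.

Lemma Rsuml_cons {A} (f : A -> R) x l : Rsuml f (x :: l) = f x + Rsuml f l.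
Proof. reflexivity. Qed.
Lemma Rsuml_nil {A} (f : A -> R) : Rsuml f [] = 0.
Proof. reflexivity. Qed.
Lemma Rsuml_app {A} (f : A -> R) l1 l2 : Rsuml f (l1 ++ l2) = Rsuml f l1 + Rsuml f l2.
Proof. induction l1; simpl; unfold Rsuml in *; simpl; [ring| rewrite IHl1; ring]. Qed.
Lemma Rsuml_map {A B} (f : B -> R) (g : A -> B) l : Rsuml f (map g l) = Rsuml (fun x => f (g x)) l.
Proof. unfold Rsuml. now rewrite map_map. Qed.
Lemma Rsuml_ext {A} (f g : A -> R) l : (forall x, In x l -> f x = g x) -> Rsuml f l = Rsuml g l.
Proof. induction l; intros H; [reflexivity|]. rewrite !Rsuml_cons. f_equal. apply H; now left. apply IHl; intros; apply H; now right. Qed.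
Lemma Rsuml_le {A} (f g : A -> R) l : (forall x, In x l -> f x <= g x) -> Rsuml f l <= Rsuml g l.
Proof. induction l; intros H; [rewrite !Rsuml_nil; lra|]. rewrite !Rsuml_cons. apply Rplus_le_compat. apply H; now left. apply IHl; intros; apply H; now right. Qed.
Lemma Rsuml_plus {A} (f g : A -> R) l : Rsuml (fun x => f x + g x) l = Rsuml f l + Rsuml g l.
Proof. induction l; [rewrite !Rsuml_nil; lra|]. rewrite !Rsuml_cons, IHl. ring. Qed.
Lemma Rsuml_scal {A} (c : R) (f : A -> R) l : Rsuml (fun x => c * f x) l = c * Rsuml f l.
Proof. induction l; [rewrite !Rsuml_nil; lra|]. rewrite !Rsuml_cons, IHl. ring. Qed.
Lemma Rsuml_abs {A} (f : A -> R) l : Rabs (Rsuml f l) <= Rsuml (fun x => Rabs (f x)) l.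
Proof. induction l; [rewrite !Rsuml_nil, Rabs_R0; lra|]. rewrite !Rsuml_cons.
  eapply Rle_trans; [apply Rabs_triang|]. lra. Qed.
Lemma Rsuml_nonneg {A} (f : A -> R) l : (forall x, In x l -> 0 <= f x) -> 0 <= Rsuml f l.
Proof. intros H. replace 0 with (Rsuml (fun _ : A => 0) l). apply Rsuml_le; auto.
  induction l; auto. rewrite Rsuml_cons, IHl; [ring|]. intros; apply H; now right. Qed.

Lemma Csum_pair {A} (f : A -> C) l : Csum f l = (Rsuml (fun x => fst (f x)) l, Rsuml (fun x => snd (f x)) l).
Proof. induction l; [reflexivity|]. unfold Csum in *; simpl. rewrite IHl. reflexivity. Qed.

Lemma Zrange_S n : Zrange (S n) = ((- Z.of_nat (S n))%Z :: Zrange n) ++ [Z.of_nat (S n)].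
Proof.
  unfold Zrange. replace (2 * S n + 1)%nat with (S (S (2 * n + 1))) by lia.
  rewrite seq_S. change (seq 0 (S (2*n+1))) with (0 :: seq 1 (2*n+1))%nat. rewrite <- seq_shift. rewrite map_app, map_cons, map_map.
  cbn [app map]. f_equal. f_equal; [apply map_ext; intros; lia|]. f_equal. lia.
Qed.

Lemma Rsuml_Zrange_S (f : Z -> R) n : Rsuml f (Zrange (S n)) = Rsuml f (Zrange n) + f (Z.of_nat (S n)) + f (- Z.of_nat (S n))%Z.
Proof. rewrite Zrange_S, Rsuml_app, !Rsuml_cons, Rsuml_nil. ring. Qed.

Lemma Rsuml_Zrange_decomp (f : Z -> R) N : Rsuml f (Zrange N) = f 0%Z + Rsuml (fun m => f (Z.of_nat m) + f (- Z.of_nat m)%Z) (seq 1 N).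
Proof.
  induction N. { unfold Zrange. simpl. unfold Rsuml; simpl. ring. }
  rewrite Rsuml_Zrange_S, IHN, seq_S, Rsuml_app, Rsuml_cons, Rsuml_nil.
  replace (1 + N)%nat with (S N) by lia. ring.
Qed.

Lemma Rsuml_Zrange_refl (f : Z -> R) N : Rsuml f (Zrange N) = Rsuml (fun k => f (- k)%Z) (Zrange N).
Proof. rewrite !Rsuml_Zrange_decomp. simpl. f_equal. apply Rsuml_ext. intros. rewrite Z.opp_involutive. ring. Qed.

Lemma seq_sum_shift (u : nat -> R) L : Rsuml (fun i => u (S i)) (seq 0 L) + u 0%nat = Rsuml u (seq 0 L) + u L.
Proof.
  induction L. { simpl. unfold Rsuml; simpl. ring. }
  rewrite !seq_S, !Rsuml_app, !Rsuml_cons, !Rsuml_nil. rewrite Nat.add_0_l. lra.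
Qed.

Lemma Rsuml_Zrange_shift1 (g : Z -> R) N : (forall k, g (k + Z.of_nat (2 * N + 1))%Z = g k) ->
  Rsuml (fun k => g (k + 1)%Z) (Zrange N) = Rsuml g (Zrange N).
Proof.
  intros Hp. unfold Zrange. rewrite !Rsuml_map.
  pose (u := fun i : nat => g (Z.of_nat i - Z.of_nat N)%Z).
  assert (H := seq_sum_shift u (2 * N + 1)). unfold u in H.
  replace (g (Z.of_nat (2 * N + 1) - Z.of_nat N)%Z) with (g (Z.of_nat 0 - Z.of_nat N)%Z) in H.
  2:{ rewrite <- Hp. f_equal. lia. }
  erewrite Rsuml_ext. 2:{ intros. replace (Z.of_nat x - Z.of_nat N + 1)%Z with (Z.of_nat (S x) - Z.of_nat N)%Z by lia. reflexivity. }
  lra.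
Qed.

Lemma Rsuml_Zrange_shift (f : Z -> R) N : (forall k, f (k + Z.of_nat (2 * N + 1))%Z = f k) ->
  forall j, Rsuml (fun k => f (k + j)%Z) (Zrange N) = Rsuml f (Zrange N).
Proof.
  intros Hp. apply Z.peano_ind.
  - apply Rsuml_ext. intros. now rewrite Z.add_0_r.
  - intros x IH. rewrite <- IH. rewrite <- (Rsuml_Zrange_shift1 (fun k => f (k + x)%Z)).
    + apply Rsuml_ext. intros. f_equal. lia.
    + intros. rewrite <- (Hp (k + x)%Z). f_equal. lia.
  - intros x IH. rewrite <- IH. rewrite <- (Rsuml_Zrange_shift1 (fun k => f (k + Z.pred x)%Z)).
    + apply Rsuml_ext. intros. f_equal. lia.
    + intros. rewrite <- (Hp (k + Z.pred x)%Z). f_equal. lia.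
Qed.


Definition E (t : R) : C := (cos t, sin t).

Lemma E_per t : E (t + 2 * PI) = E t.
Proof. unfold E. rewrite cos_plus, sin_plus, cos_2PI, sin_2PI. f_equal; ring. Qed.

Lemma Cmod_E t : Cmod (E t) = 1.
Proof. unfold Cmod, E; simpl. replace (cos t * (cos t * 1) + sin t * (sin t * 1)) with (sin t ^2 + cos t ^2) by ring.
  rewrite <- !Rsqr_pow2, sin2_cos2. apply sqrt_1. Qed.

Lemma Cpow_E t m : Cpow (E t) m = E (INR m * t).
Proof. induction m. { simpl. unfold E. rewrite Rmult_0_l, cos_0, sin_0. reflexivity. }
  change (Cpow (E t) (S m)) with (E t * Cpow (E t) m)%C. rewrite IHm, S_INR. unfold E, Cmult; simpl.
  replace ((INR m + 1) * t) with (t + INR m * t) by ring. rewrite cos_plus, sin_plus. f_equal; ring. Qed.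

Lemma Cinv_E t : Cinv (E t) = E (- t).
Proof. unfold Cinv, E; simpl. rewrite cos_neg, sin_neg.
  replace (cos t * (cos t * 1) + sin t * (sin t * 1)) with 1. f_equal; field.
  pose proof (sin2_cos2 t). unfold Rsqr in *. lra. Qed.

Lemma Cpowz_E t k : Cpowz (E t) k = E (IZR k * t).
Proof. unfold Cpowz. destruct (Z.leb_spec 0 k).
  - rewrite Cpow_E. f_equal. f_equal. rewrite INR_IZR_INZ. rewrite Z2Nat.id; auto.
  - rewrite Cinv_E, Cpow_E. f_equal. rewrite INR_IZR_INZ, Z2Nat.id by lia. rewrite opp_IZR. ring. Qed.

Lemma Cdiv_E a b : Cdiv (E a) (E b) = E (a - b).
Proof. unfold Cdiv. rewrite Cinv_E. unfold E, Cmult; simpl. unfold Rminus. rewrite cos_plus, sin_plus, cos_neg, sin_neg. f_equal; ring. Qed.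

Lemma E_exists (a : C) : Cmod a = 1 -> exists t, a = E t.
Proof.
  destruct a as [x y]. unfold Cmod; simpl. intros H.
  assert (Hs : x * (x * 1) + y * (y * 1) = 1).
  { rewrite <- (sqrt_sqrt (x * (x * 1) + y * (y * 1))) by nra. rewrite H. ring. }
  assert (Hx : -1 <= x <= 1) by nra.
  destruct (Rle_or_lt 0 y).
  - exists (acos x). unfold E. rewrite cos_acos by auto. rewrite sin_acos by auto. f_equal.
    replace (1 - x²) with (y²) by (unfold Rsqr; nra). rewrite sqrt_Rsqr; auto.
  - exists (- acos x). unfold E. rewrite cos_neg, sin_neg, cos_acos by auto. rewrite sin_acos by auto. f_equal.
    replace (1 - x²) with ((-y)²) by (unfold Rsqr; nra). rewrite sqrt_Rsqr; lra.
Qed.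

Lemma Rsuml_zero {A} (l : list A) : Rsuml (fun _ => 0) l = 0.
Proof. induction l; auto. rewrite Rsuml_cons, IHl. ring. Qed.

Definition Dr (n : nat) (t : R) : R := Rsuml (fun k => cos (IZR k * t)) (Zrange n).

Lemma Dir_E n t : Dir n (E t) = RtoC (Dr n t).
Proof.
  unfold Dir. rewrite Csum_pair. unfold RtoC. f_equal.
  - apply Rsuml_ext. intros. rewrite Cpowz_E. reflexivity.
  - rewrite Rsuml_Zrange_decomp. rewrite Cpowz_E. simpl. rewrite Rmult_0_l, sin_0.
    rewrite (Rsuml_ext _ (fun _ => 0)). { rewrite Rsuml_zero. ring. }
    intros m _. rewrite !Cpowz_E. simpl. rewrite opp_IZR, Ropp_mult_distr_l_reverse, sin_neg. ring.
Qed.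

Lemma Dr_S n t : Dr (S n) t = Dr n t + 2 * cos (INR (S n) * t).
Proof. unfold Dr. rewrite Rsuml_Zrange_S. rewrite opp_IZR, <- INR_IZR_INZ, Ropp_mult_distr_l_reverse, cos_neg. ring. Qed.

Lemma Dr_0 t : Dr 0 t = 1.
Proof. unfold Dr, Zrange. simpl. unfold Rsuml; simpl. rewrite Rmult_0_l, cos_0. ring. Qed.

Lemma Dr_sin n t : Dr n t * sin (t / 2) = sin ((2 * INR n + 1) * (t / 2)).
Proof.
  induction n. { rewrite Dr_0. replace ((2 * INR 0 + 1) * (t / 2)) with (t / 2) by (simpl; ring). ring. }
  rewrite Dr_S, Rmult_plus_distr_r, IHn. set (u := t / 2). replace t with (2 * u) by (unfold u; field).
  rewrite S_INR. set (A := (2 * INR n + 2) * u).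
  replace ((2 * INR n + 1) * u) with (A - u) by (unfold A; ring).
  replace ((2 * (INR n + 1) + 1) * u) with (A + u) by (unfold A; ring).
  replace ((INR n + 1) * (2 * u)) with A by (unfold A; ring).
  rewrite sin_plus, sin_minus. ring.
Qed.

Lemma Dr_abs n t : Rabs (Dr n t) <= 2 * INR n + 1.
Proof.
  induction n. { rewrite Dr_0, Rabs_R1. simpl. lra. }
  rewrite Dr_S. eapply Rle_trans; [apply Rabs_triang|].
  rewrite Rabs_mult, (Rabs_right 2) by lra.
  assert (Rabs (cos (INR (S n) * t)) <= 1) by (apply Rabs_le; apply COS_bound). set (c := cos (INR (S n) * t)) in *. rewrite S_INR. lra.
Qed.

Lemma Dr_sinbound n t s : 0 < s -> s <= Rabs (sin (t / 2)) -> Rabs (Dr n t) <= / s.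
Proof.
  intros Hs Hle. pose proof (Dr_sin n t) as H. apply (f_equal Rabs) in H. rewrite Rabs_mult in H.
  assert (Rabs (sin ((2 * INR n + 1) * (t / 2))) <= 1) by (apply Rabs_le; apply SIN_bound).
  assert (Rabs (Dr n t) * s <= 1).
  { eapply Rle_trans; [|apply H0]. rewrite <- H. apply Rmult_le_compat_l; auto. apply Rabs_pos. }
  apply (Rmult_le_reg_r s); auto. rewrite Rinv_l; lra.
Qed.

Lemma Dr_even n t : Dr n (- t) = Dr n t.
Proof. unfold Dr. apply Rsuml_ext. intros. rewrite <- Ropp_mult_distr_r, cos_neg. reflexivity. Qed.


Definition Fr (n : nat) (t : R) : R :=
  Rsuml (fun k => (1 - IZR (Z.abs k) / (INR n + 1)) * cos (IZR k * t)) (Zrange n).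
Definition Tr (n : nat) (t : R) : R :=
  Rsuml (fun k => (INR n + 1 - IZR (Z.abs k)) * cos (IZR k * t)) (Zrange n).

Lemma INR_n1_pos n : 0 < INR n + 1.
Proof. pose proof (pos_INR n). lra. Qed.

Lemma Fej_E n t : Fej n (E t) = RtoC (Fr n t).
Proof.
  unfold Fej. rewrite Csum_pair. unfold RtoC. f_equal.
  - apply Rsuml_ext. intros. rewrite Cpowz_E. unfold E; simpl. ring.
  - rewrite Rsuml_Zrange_decomp. rewrite Cpowz_E. simpl. rewrite Rmult_0_l, sin_0.
    rewrite (Rsuml_ext _ (fun _ => 0)). { rewrite Rsuml_zero. ring. }
    intros m _. rewrite !Cpowz_E. simpl. rewrite Z.abs_opp, opp_IZR, Ropp_mult_distr_l_reverse, sin_neg. ring.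
Qed.

Lemma Fr_Tr n t : Fr n t = Tr n t / (INR n + 1).
Proof. unfold Fr, Tr. unfold Rdiv. rewrite Rmult_comm, <- Rsuml_scal. apply Rsuml_ext. intros.
  pose proof (INR_n1_pos n). field. lra. Qed.

Lemma IZR_abs_nat m : IZR (Z.abs (Z.of_nat m)) = INR m.
Proof. rewrite Z.abs_eq by lia. symmetry. apply INR_IZR_INZ. Qed.

Lemma Tr_S n t : Tr (S n) t = Tr n t + Dr (S n) t.
Proof.
  unfold Tr, Dr.
  rewrite (Rsuml_ext (fun k => (INR (S n) + 1 - IZR (Z.abs k)) * cos (IZR k * t))
      (fun k => (INR n + 1 - IZR (Z.abs k)) * cos (IZR k * t) + cos (IZR k * t))).
  2:{ intros. rewrite S_INR. ring. }
  rewrite Rsuml_plus, !Rsuml_Zrange_S. rewrite Z.abs_opp, IZR_abs_nat, S_INR. ring.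
Qed.

Lemma Tr_0 t : Tr 0 t = 1.
Proof. unfold Tr, Zrange. simpl. unfold Rsuml; simpl. rewrite Rmult_0_l, cos_0. ring. Qed.

Lemma Tr_sin n t : Tr n t * (2 * sin (t / 2) ^ 2) = 1 - cos ((INR n + 1) * t).
Proof.
  induction n.
  { rewrite Tr_0. replace ((INR 0 + 1) * t) with (2 * (t / 2)) by (simpl; field).
    rewrite cos_2a_sin. ring. }
  rewrite Tr_S, Rmult_plus_distr_r, IHn.
  replace (Dr (S n) t * (2 * sin (t / 2) ^ 2)) with (2 * (Dr (S n) t * sin (t / 2)) * sin (t / 2)) by ring.
  rewrite Dr_sin. set (u := t / 2). replace t with (2 * u) by (unfold u; field).
  rewrite S_INR. set (A := (2 * INR n + 3) * u).
  replace ((2 * (INR n + 1) + 1) * u) with A by (unfold A; ring).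
  replace ((INR n + 1) * (2 * u)) with (A - u) by (unfold A; ring).
  replace ((INR n + 1 + 1) * (2 * u)) with (A + u) by (unfold A; ring).
  rewrite cos_plus, cos_minus. ring.
Qed.

Lemma Tr_abs n t : Rabs (Tr n t) <= (INR n + 1) ^ 2.
Proof.
  induction n. { rewrite Tr_0, Rabs_R1. simpl. lra. }
  rewrite Tr_S. eapply Rle_trans; [apply Rabs_triang|]. pose proof (Dr_abs (S n) t).
  rewrite S_INR in *. nra.
Qed.

Lemma Fr_abs n t : Rabs (Fr n t) <= INR n + 1.
Proof.
  rewrite Fr_Tr. pose proof (INR_n1_pos n). unfold Rdiv. rewrite Rabs_mult, (Rabs_right (/ _)).
  2:{ apply Rle_ge. apply Rlt_le. apply Rinv_0_lt_compat; auto. }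
  apply (Rmult_le_reg_r (INR n + 1)); auto. rewrite Rmult_assoc, Rinv_l by lra.
  pose proof (Tr_abs n t). nra.
Qed.

Lemma Fr_sinbound n t s : 0 < s -> s <= Rabs (sin (t / 2)) -> Rabs (Fr n t) <= / ((INR n + 1) * s ^ 2).
Proof.
  intros Hs Hle. pose proof (Tr_sin n t) as H. apply (f_equal Rabs) in H. rewrite Rabs_mult in H.
  assert (Rabs (1 - cos ((INR n + 1) * t)) <= 2).
  { pose proof (COS_bound ((INR n + 1) * t)). apply Rabs_le. lra. }
  assert (Rabs (2 * sin (t / 2) ^ 2) = 2 * Rabs (sin (t/2)) ^ 2).
  { rewrite Rabs_mult, Rabs_right by lra. rewrite <- RPow_abs. reflexivity. }
  assert (s ^ 2 <= Rabs (sin (t / 2)) ^ 2) by (apply pow_incr; lra).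
  assert (HT : Rabs (Tr n t) * s ^ 2 <= 1).
  { assert (Rabs (Tr n t) * (2 * s ^ 2) <= 2). { rewrite H1 in H. eapply Rle_trans; [|apply H0]. rewrite <- H.
      apply Rmult_le_compat_l. apply Rabs_pos. lra. } lra. }
  rewrite Fr_Tr. pose proof (INR_n1_pos n). unfold Rdiv. rewrite Rabs_mult, (Rabs_right (/ _)).
  2:{ apply Rle_ge. apply Rlt_le. apply Rinv_0_lt_compat; auto. }
  assert (0 < s ^ 2) by (apply pow_lt; auto).
  rewrite Rinv_mult. rewrite (Rmult_comm (/ (INR n + 1))).
  apply Rmult_le_compat_r. apply Rlt_le, Rinv_0_lt_compat; auto.
  apply (Rmult_le_reg_r (s ^ 2)); auto. rewrite Rinv_l by lra. auto.
Qed.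

Lemma Fr_even n t : Fr n (- t) = Fr n t.
Proof. unfold Fr. apply Rsuml_ext. intros. rewrite <- Ropp_mult_distr_r, cos_neg. reflexivity. Qed.


Lemma sinlb_eq a : sin_lb a = a - a^3/6 + a^5/120 - a^7/5040.
Proof. unfold sin_lb, sin_approx, sin_term. simpl. field. Qed.
Lemma coslb_eq a : cos_lb a = 1 - a^2/2 + a^4/24 - a^6/720.
Proof. unfold cos_lb, cos_approx, cos_term. simpl. field. Qed.

Lemma PI_gt3 : 3 < PI.
Proof. pose proof PI2_3_2. lra. Qed.

Lemma jordan y : 0 <= y -> y <= PI / 2 -> 2 * y <= PI * sin y.
Proof.
  intros H0 H1. pose proof PI_gt3. pose proof PI_4.
  destruct (Rle_or_lt y 1) as [Hy|Hy].
  - destruct (SIN y) as [Hs _]; [lra|lra|]. rewrite sinlb_eq in Hs.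
    assert (0 <= y ^ 5 / 120 - y ^ 7 / 5040).
    { replace (y ^ 5 / 120 - y ^ 7 / 5040) with (y ^ 5 * (1/120 - y^2/5040)) by field.
      apply Rmult_le_pos. apply pow_le; lra. assert (y ^ 2 <= 1) by nra. lra. }
    assert (y ^ 3 <= y) by (simpl; nra).
    assert (5 / 6 * y <= sin y) by lra. nra.
  - set (u := PI / 2 - y). assert (Hsy : sin y = cos u) by (unfold u; rewrite cos_shift; reflexivity).
    destruct (COS u) as [Hc _]; [unfold u; lra|unfold u; lra|]. rewrite coslb_eq in Hc.
    assert (0 <= u) by (unfold u; lra). assert (u <= 1) by (unfold u; lra).
    assert (0 <= u ^ 4 / 24 - u ^ 6 / 720).
    { replace (u ^ 4 / 24 - u ^ 6 / 720) with (u ^ 4 * (1/24 - u^2/720)) by field.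
      apply Rmult_le_pos. apply pow_le; lra. assert (u ^ 2 <= 1) by nra. lra. }
    assert (1 - u ^ 2 / 2 <= sin y) by lra.
    assert (y = PI / 2 - u) by (unfold u; ring).
    assert (PI * u <= 4) by nra.
    assert (PI * (1 - u ^ 2 / 2) >= 2 * y) by (simpl; nra). nra.
Qed.

Lemma L_sin x c : 0 <= x <= 2 * PI -> 0 <= c -> c <= x -> c <= 2 * PI - x -> c / PI <= sin (x / 2).
Proof.
  intros Hx Hc H1 H2. pose proof PI_gt3.
  apply (Rmult_le_reg_l PI); [lra|]. replace (PI * (c / PI)) with c by (field; lra).
  destruct (Rle_or_lt x PI).
  - pose proof (jordan (x / 2)). lra.
  - rewrite <- sin_PI_x. pose proof (jordan (PI - x / 2)). lra.
Qed.

Definition dlt (N : nat) := 2 * PI / (2 * INR N + 1).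

Lemma M_pos N : 0 < 2 * INR N + 1.
Proof. pose proof (pos_INR N). lra. Qed.

Lemma dlt_pos N : 0 < dlt N.
Proof. unfold dlt. pose proof PI_RGT_0. pose proof (M_pos N). apply Rdiv_lt_0_compat; lra. Qed.

Lemma dlt_M N : dlt N * (2 * INR N + 1) = 2 * PI.
Proof. unfold dlt. pose proof (M_pos N). field. lra. Qed.

Lemma IZR_M N : IZR (Z.of_nat (2 * N + 1)) = 2 * INR N + 1.
Proof. rewrite <- INR_IZR_INZ, plus_INR, mult_INR. simpl. ring. Qed.

Lemma reduce N (h : R -> R) B :
  (forall t, h (t + 2 * PI) = h t) -> (forall t, h (- t) = h t) ->
  (forall p, 0 <= p <= dlt N / 2 -> Rsuml (fun k => h (IZR k * dlt N - p)) (Zrange N) <= B) ->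
  forall phi, Rsuml (fun k => h (IZR k * dlt N - phi)) (Zrange N) <= B.
Proof.
  intros Hper Hev HB phi. pose proof (dlt_pos N) as Hd. pose proof (dlt_M N) as HdM. set (d := dlt N) in *.
  set (f := fun k => h (IZR k * d - phi)).
  assert (Hp : forall k, f (k + Z.of_nat (2 * N + 1))%Z = f k).
  { intros. unfold f. rewrite plus_IZR, IZR_M. rewrite <- (Hper (IZR k * d - phi)). f_equal.
    pose proof (dlt_M N). fold d in H. rewrite <- H. ring. }
  set (j := (up (phi / d) - 1)%Z).
  destruct (archimed (phi / d)) as [Ha1 Ha2].
  assert (Hj1 : IZR j * d <= phi).
  { unfold j. rewrite minus_IZR. apply (Rmult_le_reg_r (/ d)). apply Rinv_0_lt_compat; lra.
    replace ((IZR (up (phi / d)) - 1) * d * / d) with (IZR (up (phi / d)) - 1) by (field; lra).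
    unfold Rdiv in Ha2. lra. }
  assert (Hj2 : phi < IZR j * d + d).
  { unfold j. rewrite minus_IZR. apply (Rmult_lt_reg_r (/ d)). apply Rinv_0_lt_compat; lra.
    replace ((IZR (up (phi / d)) - 1) * d + d) with (IZR (up (phi / d)) * d) by ring.
    replace (IZR (up (phi / d)) * d * / d) with (IZR (up (phi / d))) by (field; lra).
    unfold Rdiv in Ha1. lra. }
  change (Rsuml f (Zrange N) <= B).
  destruct (Rle_or_lt (phi - IZR j * d) (d / 2)).
  - rewrite <- (Rsuml_Zrange_shift f N Hp j).
    eapply Rle_trans; [|apply (HB (phi - IZR j * d)); lra].
    right. apply Rsuml_ext. intros. unfold f. f_equal. rewrite plus_IZR. ring.
  - rewrite <- (Rsuml_Zrange_shift f N Hp (j + 1)).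
    eapply Rle_trans; [|apply (HB (IZR j * d + d - phi)); lra].
    right. rewrite Rsuml_Zrange_refl. apply Rsuml_ext. intros. unfold f. rewrite <- Hev. f_equal.
    rewrite !plus_IZR, opp_IZR. ring.
Qed.


Lemma pos_term N m p : (2 <= m <= N)%nat -> 0 <= p <= dlt N / 2 ->
  (2 * INR m - 1) / (2 * INR N + 1) <= Rabs (sin ((INR m * dlt N - p) / 2)).
Proof.
  intros Hm Hp. pose proof (dlt_pos N) as Hd. pose proof (dlt_M N) as HdM. pose proof (M_pos N).
  set (d := dlt N) in *.
  assert (Hk : 2 * PI = 2 * (INR N * d) + d) by (rewrite <- HdM; ring).
  assert (H2 : 2 <= INR m) by (replace 2 with (INR 2) by reflexivity; apply le_INR; lia).
  assert (HmN : INR m <= INR N) by (apply le_INR; lia).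
  assert (A1 : 2 * d <= INR m * d) by (apply Rmult_le_compat_r; lra).
  assert (A2 : INR m * d <= INR N * d) by (apply Rmult_le_compat_r; lra).
  eapply Rle_trans; [|apply Rle_abs].
  replace ((2 * INR m - 1) / (2 * INR N + 1)) with ((INR m * d - d / 2) / PI).
  2:{ unfold d, dlt. pose proof PI_RGT_0. field. lra. }
  apply L_sin; lra.
Qed.

Lemma neg_term N m p : (1 <= m <= N)%nat -> 0 <= p <= dlt N / 2 ->
  2 * INR m / (2 * INR N + 1) <= Rabs (sin ((- INR m * dlt N - p) / 2)).
Proof.
  intros Hm Hp. pose proof (dlt_pos N) as Hd. pose proof (dlt_M N) as HdM. pose proof (M_pos N).
  set (d := dlt N) in *.
  assert (Hk : 2 * PI = 2 * (INR N * d) + d) by (rewrite <- HdM; ring).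
  assert (H2 : 1 <= INR m) by (replace 1 with (INR 1) by reflexivity; apply le_INR; lia).
  assert (HmN : INR m <= INR N) by (apply le_INR; lia).
  assert (A1 : d <= INR m * d) by nra.
  assert (A2 : INR m * d <= INR N * d) by (apply Rmult_le_compat_r; lra).
  replace ((- INR m * d - p) / 2) with (- ((INR m * d + p) / 2)) by field.
  rewrite sin_neg, Rabs_Ropp.
  eapply Rle_trans; [|apply Rle_abs].
  replace (2 * INR m / (2 * INR N + 1)) with ((INR m * d) / PI).
  2:{ unfold d, dlt. pose proof PI_RGT_0. field. lra. }
  apply L_sin; lra.
Qed.

Lemma shift_sum (g P : nat -> R) N B0 : 0 <= B0 -> ((1 <= N)%nat -> g 1%nat <= B0) ->
  (forall m, (2 <= m <= N)%nat -> g m <= P (m - 1)%nat) -> (forall m, (1 <= m <= N)%nat -> 0 <= P m) ->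
  Rsuml g (seq 1 N) <= B0 + Rsuml P (seq 1 N).
Proof.
  intros HB H1 H2 H3. destruct N as [|N]. { simpl. unfold Rsuml; simpl. lra. }
  change (seq 1 (S N)) with (1%nat :: seq 2 N) at 1. rewrite Rsuml_cons.
  rewrite <- seq_shift, Rsuml_map.
  assert (Rsuml (fun x => g (S x)) (seq 1 N) <= Rsuml P (seq 1 N)).
  { apply Rsuml_le. intros x Hx. apply in_seq in Hx. replace x with (S x - 1)%nat at 2 by lia. apply H2. lia. }
  assert (Rsuml P (seq 1 N) <= Rsuml P (seq 1 (S N))).
  { rewrite seq_S, Rsuml_app, Rsuml_cons, Rsuml_nil. pose proof (H3 (1 + N)%nat). assert (0 <= P (1+N)%nat) by (apply H3; lia). lra. }
  pose proof (H1 ltac:(lia)). lra.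
Qed.

Lemma tele_sum N : Rsuml (fun j => / (INR j * (INR j + 1))) (seq 1 N) = 1 - / (INR N + 1).
Proof.
  induction N. { simpl. unfold Rsuml; simpl. field. }
  rewrite seq_S, Rsuml_app, IHN, Rsuml_cons, Rsuml_nil. replace (1 + N)%nat with (S N) by lia.
  rewrite S_INR. pose proof (pos_INR N). field. split; lra.
Qed.

Lemma harm_nonneg N : 0 <= harmonic N.
Proof. unfold harmonic. apply Rsuml_nonneg. intros x Hx. apply in_seq in Hx.
  apply Rlt_le, Rinv_0_lt_compat, lt_0_INR; lia. Qed.

Lemma Dir_sum N n p : 0 <= p <= dlt N / 2 ->
  Rsuml (fun k => Rabs (Dr n (IZR k * dlt N - p))) (Zrange N) <= 4 * INR n + 2 + (2 * INR N + 1) * harmonic N.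
Proof.
  intros Hp. pose proof (M_pos N). set (M := 2 * INR N + 1) in *.
  rewrite Rsuml_Zrange_decomp, Rsuml_plus.
  pose proof (Dr_abs n (IZR 0 * dlt N - p)).
  assert (Hpos : Rsuml (fun m => Rabs (Dr n (IZR (Z.of_nat m) * dlt N - p))) (seq 1 N)
            <= (2 * INR n + 1) + Rsuml (fun j => M / 2 * / INR j) (seq 1 N)).
  { apply shift_sum.
    - pose proof (pos_INR n); lra.
    - intros. apply Dr_abs.
    - intros m Hm. rewrite <- INR_IZR_INZ.
      assert (H2 : 2 <= INR m) by (replace 2 with (INR 2) by reflexivity; apply le_INR; lia).
      rewrite minus_INR by lia. change (INR 1) with 1.
      eapply Rle_trans. apply (Dr_sinbound _ _ ((2 * INR m - 1) / M)).
      + apply Rdiv_lt_0_compat; lra.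
      + apply pos_term; auto.
      + rewrite Rinv_div. replace (M / 2 * / (INR m - 1)) with (M / (2 * INR m - 2)) by (field; lra).
        apply Rmult_le_compat_l; [lra|]. apply Rinv_le_contravar; lra.
    - intros m Hm. assert (1 <= INR m) by (replace 1 with (INR 1) by reflexivity; apply le_INR; lia).
      apply Rmult_le_pos; [lra|]. apply Rlt_le, Rinv_0_lt_compat; lra. }
  assert (Hneg : Rsuml (fun m => Rabs (Dr n (IZR (- Z.of_nat m) * dlt N - p))) (seq 1 N)
            <= Rsuml (fun j => M / 2 * / INR j) (seq 1 N)).
  { apply Rsuml_le. intros m Hm. apply in_seq in Hm.
    assert (1 <= INR m) by (replace 1 with (INR 1) by reflexivity; apply le_INR; lia).
    rewrite opp_IZR, <- INR_IZR_INZ.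
    eapply Rle_trans. apply (Dr_sinbound _ _ (2 * INR m / M)).
    + apply Rdiv_lt_0_compat; lra.
    + apply neg_term; auto. lia.
    + rewrite Rinv_div. right. field. lra. }
  rewrite Rsuml_scal in Hpos, Hneg. fold (harmonic N) in Hpos, Hneg.
  replace (M / 2 * harmonic N) with (M * harmonic N / 2) in * by field.
  lra.
Qed.

Lemma inv_le_helper a b e : 0 < a -> 0 <= e -> b = a + e -> / b <= / a.
Proof. intros. subst. apply Rinv_le_contravar; lra. Qed.

Lemma Fej_sum N n p : 0 <= p <= dlt N / 2 ->
  Rsuml (fun k => Rabs (Fr n (IZR k * dlt N - p))) (Zrange N) <=
    2 * (INR n + 1) + 3 * ((2 * INR N + 1) ^ 2 / (4 * (INR n + 1))).
Proof.
  intros Hp. pose proof (M_pos N). pose proof (INR_n1_pos n). set (M := 2 * INR N + 1) in *.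
  set (K := INR n + 1) in *. set (C := M ^ 2 / (4 * K)).
  assert (HC : 0 < C) by (unfold C; apply Rdiv_lt_0_compat; [apply pow_lt|]; lra).
  rewrite Rsuml_Zrange_decomp, Rsuml_plus.
  pose proof (Fr_abs n (IZR 0 * dlt N - p)). fold K in H1.
  assert (Hpos : Rsuml (fun m => Rabs (Fr n (IZR (Z.of_nat m) * dlt N - p))) (seq 1 N)
            <= K + Rsuml (fun j => C * / (INR j * (INR j + 1))) (seq 1 N)).
  { apply shift_sum.
    - lra.
    - intros. apply Fr_abs.
    - intros m Hm. rewrite <- INR_IZR_INZ.
      assert (H2 : 2 <= INR m) by (replace 2 with (INR 2) by reflexivity; apply le_INR; lia).
      rewrite minus_INR by lia. change (INR 1) with 1.
      eapply Rle_trans. apply (Fr_sinbound _ _ ((2 * INR m - 1) / M)).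
      + apply Rdiv_lt_0_compat; lra.
      + apply pos_term; auto.
      + fold K. replace (C * / ((INR m - 1) * (INR m - 1 + 1))) with (/ (4 * K * ((INR m - 1) * INR m) / M ^ 2)).
        2:{ unfold C. field. repeat split; lra. }
        apply (inv_le_helper _ _ (K / M ^ 2)).
        * apply Rdiv_lt_0_compat; [|apply pow_lt; lra]. apply Rmult_lt_0_compat; [lra|]. nra.
        * apply Rlt_le, Rdiv_lt_0_compat; [lra|apply pow_lt; lra].
        * field. lra.
    - intros m Hm. assert (1 <= INR m) by (replace 1 with (INR 1) by reflexivity; apply le_INR; lia).
      apply Rmult_le_pos; [lra|]. apply Rlt_le, Rinv_0_lt_compat. nra. }
  assert (Hneg : Rsuml (fun m => Rabs (Fr n (IZR (- Z.of_nat m) * dlt N - p))) (seq 1 N)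
            <= Rsuml (fun j => 2 * C * / (INR j * (INR j + 1))) (seq 1 N)).
  { apply Rsuml_le. intros m Hm. apply in_seq in Hm.
    assert (1 <= INR m) by (replace 1 with (INR 1) by reflexivity; apply le_INR; lia).
    rewrite opp_IZR, <- INR_IZR_INZ.
    eapply Rle_trans. apply (Fr_sinbound _ _ (2 * INR m / M)).
    + apply Rdiv_lt_0_compat; lra.
    + apply neg_term; auto. lia.
    + fold K. replace (2 * C * / (INR m * (INR m + 1))) with (/ (2 * K * (INR m * (INR m + 1)) / M ^ 2)).
      2:{ unfold C. field. repeat split; lra. }
      apply (inv_le_helper _ _ (2 * K * (INR m * (INR m - 1)) / M ^ 2)).
      * apply Rdiv_lt_0_compat; [|apply pow_lt; lra]. apply Rmult_lt_0_compat; [lra|]. nra.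
      * apply Rmult_le_pos; [|apply Rlt_le, Rinv_0_lt_compat, pow_lt; lra]. apply Rmult_le_pos; [lra|]. nra.
      * field. lra. }
  rewrite Rsuml_scal, tele_sum in Hpos, Hneg.
  assert (0 < / (INR N + 1)) by (apply Rinv_0_lt_compat; pose proof (pos_INR N); lra).
  assert (C * (1 - / (INR N + 1)) <= C) by nra.
  lra.
Qed.


Lemma rootpt_E N k : rootpt N k = E (IZR k * dlt N).
Proof. unfold rootpt, E, dlt. pose proof (M_pos N). f_equal; f_equal; field; lra. Qed.

Lemma avg_conv N (K : C -> C) phi : avgTN N K (E phi) =
  / (2 * INR N + 1) * Rsuml (fun k => Cmod (K (E (IZR k * dlt N - phi)))) (Zrange N).
Proof. unfold avgTN, TN. rewrite Rsuml_map. f_equal. apply Rsuml_ext. intros.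
  rewrite rootpt_E, Cdiv_E. reflexivity. Qed.

Lemma PI2_ge9 : 9 <= PI ^ 2.
Proof. pose proof PI_gt3. nra. Qed.

Theorem lemma5 (n N : nat) (a : C) (ha : Cmod a = 1) :
  avgTN N (Dir n) a <= (4 * INR n + 2) / (2 * INR N + 1) + harmonic N /\
  avgTN N (FejPlus2 n) a = avgTN N (Fej n) a /\
  avgTN N (Fej n) a <=
    (2 * INR n + 2) / (2 * INR N + 1)
    + ((2 * INR N + 1) / (2 * INR n + 2)) * (PI ^ 2 / 6).
Proof.
  destruct (E_exists a ha) as [phi ->].
  pose proof (M_pos N) as HM. pose proof (INR_n1_pos n) as Hn.
  split; [|split].
  - rewrite avg_conv.
    rewrite (Rsuml_ext _ (fun k => Rabs (Dr n (IZR k * dlt N - phi)))).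
    2:{ intros. rewrite Dir_E, Cmod_R. reflexivity. }
    assert (HS : Rsuml (fun k => Rabs (Dr n (IZR k * dlt N - phi))) (Zrange N) <= 4 * INR n + 2 + (2 * INR N + 1) * harmonic N).
    { apply (reduce N (fun t => Rabs (Dr n t))).
      - intros t. rewrite <- !Cmod_R, <- !Dir_E, E_per. reflexivity.
      - intros t. rewrite Dr_even. reflexivity.
      - intros. apply Dir_sum; auto. }
    apply (Rmult_le_compat_l (/ (2 * INR N + 1))) in HS; [|apply Rlt_le, Rinv_0_lt_compat; lra].
    eapply Rle_trans; [apply HS|]. right. field. lra.
  - rewrite !avg_conv. f_equal. apply Rsuml_ext. intros. unfold FejPlus2.
    rewrite Cmod_mult, Cmod_pow, Cmod_E, pow1. ring.
  - rewrite avg_conv.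
    rewrite (Rsuml_ext _ (fun k => Rabs (Fr n (IZR k * dlt N - phi)))).
    2:{ intros. rewrite Fej_E, Cmod_R. reflexivity. }
    assert (HS : Rsuml (fun k => Rabs (Fr n (IZR k * dlt N - phi))) (Zrange N) <=
      2 * (INR n + 1) + 3 * ((2 * INR N + 1) ^ 2 / (4 * (INR n + 1)))).
    { apply (reduce N (fun t => Rabs (Fr n t))).
      - intros t. rewrite <- !Cmod_R, <- !Fej_E, E_per. reflexivity.
      - intros t. rewrite Fr_even. reflexivity.
      - intros. apply Fej_sum; auto. }
    apply (Rmult_le_compat_l (/ (2 * INR N + 1))) in HS; [|apply Rlt_le, Rinv_0_lt_compat; lra].
    eapply Rle_trans; [apply HS|].
    pose proof PI2_ge9.
    replace (/ (2 * INR N + 1) * (2 * (INR n + 1) + 3 * ((2 * INR N + 1) ^ 2 / (4 * (INR n + 1)))))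
      with ((2 * INR n + 2) / (2 * INR N + 1) + ((2 * INR N + 1) / (2 * INR n + 2)) * (9 / 6)) by (field; lra).
    apply Rplus_le_compat_l. apply Rmult_le_compat_l. apply Rlt_le, Rdiv_lt_0_compat; lra. lra.
Qed.
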